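(* Let $\mathbb{X}=(X,\tau_{\mathbb{X}})$ be a topological space, $\Omega_0$ a viable base of $\mathbb{X}$, $\mathbb{D}=(D,\sqsubseteq)$ a bc-domain and $D_0\subseteq D$ a basis of $\mathbb{D}$. Then $[\widehat{\mathbb{X}}_{\Omega_0}\to\mathbb{D}]$ is a bc-domain with basis $$\widehat{\mathbb{B}}=\Big\{\bigsqcup_{i\in I}b_i\chi_{\mathcal{O}_{{\downarrow}W_i}} : I\text{ finite},\ \{b_i\chi_{\mathcal{O}_{{\downarrow}W_i}}\}_{i\in I}\text{ consistent},\ W_i\in\Omega_0,\ b_i\in D_0\Big\},$$ where ${\downarrow}W=\{U\in\Omega_0:U\subseteq W\}$. If moreover $\Omega_0$ is countable and $\mathbb{D}$ is $\omega$-continuous, then $[\widehat{\mathbb{X}}_{\Omega_0}\to\mathbb{D}]$ is $\omega$-continuous.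
   Context: A viable base of $\mathbb{X}$ is a family $\Omega_0\subseteq\tau_{\mathbb{X}}$ closed under finite unions and finite intersections (so $\emptyset,X\in\Omega_0$) which is a base of $\tau_{\mathbb{X}}$. $\mathrm{Idl}(\Omega_0)$ is the set of ideals (nonempty, downward closed, directed subsets) of $(\Omega_0,\subseteq)$, ordered by inclusion; a complete lattice. A completely prime filter of a complete lattice $L$ is a nonempty upward closed $F\subseteq L$ closed under binary meets with $\bigvee A\in F\Rightarrow A\cap F\neq\emptyset$. $\widehat{\mathbb{X}}_{\Omega_0}$ is the set $\widehat{X}$ of completely prime filters of $\mathrm{Idl}(\Omega_0)$ with the topology whose open sets are exactly $\mathcal{O}_I=\{y: I\in y\}$. A bc-domain is a dcpo with least element $\bot$, continuous (each element is the directed join of elements way-below it), in which every subset with an upper bound has a join; a basis of a dcpo is a subset $B$ such that for every $x$, $\{a\in B: a\ll x\}$ is directed with join $x$; $\omega$-continuous means having a countable basis. $[\widehat{\mathbb{X}}_{\Omega_0}\to\mathbb{D}]$ is the set of functions continuous into the Scott topology of $D$, ordered pointwise. $b\chi_O$ is the function with value $b$ on $O$ and $\bot$ elsewhere; a family $\{b_i\chi_{O_i}\}$ is consistent if for every $J\subseteq I$ with $\bigcap_{j\in J}O_j\neq\emptyset$ the set $\{b_j: j\in J\}$ has an upper bound; joins of such families are pointwise. *)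

(* Defs.v *)
From mathcomp Require Import all_boot classical_sets topology.

Unset Strict Implicit.
Unset Printing Implicit Defensive.

Local Open Scope classical_set_scope.

Section Order.
Context {P : Type} (le : P -> P -> Prop).

Definition is_ub (A : set P) (u : P) := forall a, A a -> le a u.

Definition is_lub (A : set P) (s : P) :=
  is_ub A s /\ forall u, is_ub A u -> le s u.

Definition partial_order :=
  [/\ forall x, le x x,
      forall x y z, le x y -> le y z -> le x z &
      forall x y, le x y -> le y x -> x = y].

Definition directed (A : set P) :=
  (exists a, A a) /\
  forall a b, A a -> A b -> exists c, [/\ A c, le a c & le b c].

Definition dcpo :=
  partial_order /\ forall A, directed A -> exists s, is_lub A s.

Definition way_below (x y : P) :=
  forall A s, directed A -> is_lub A s -> le y s -> exists a, A a /\ le x a.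

Definition continuous_po :=
  forall x, directed (fun a => way_below a x) /\ is_lub (fun a => way_below a x) x.

Definition is_basis (B : set P) :=
  forall x, directed (fun a => B a /\ way_below a x) /\
            is_lub (fun a => B a /\ way_below a x) x.

Definition bc_domain :=
  [/\ dcpo,
      (exists bot, forall x, le bot x),
      continuous_po &
      forall A, (exists u, is_ub A u) -> exists s, is_lub A s].

Definition countable_set {Q : Type} (B : set Q) :=
  exists g : Q -> nat, forall a b, B a -> B b -> g a = g b -> a = b.

Definition omega_continuous :=
  continuous_po /\ exists B, is_basis B /\ countable_set B.

Definition scott_open (U : set P) :=
  (forall x y, U x -> le x y -> U y) /\
  forall A s, directed A -> is_lub A s -> U s -> exists a, A a /\ U a.

End Order.

Section Hat.
Context {T : topologicalType}.

Definition viable_base (Omega0 : set (set T)) :=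
  [/\ Omega0 `<=` open,
      Omega0 set0 /\ Omega0 setT,
      (forall U V, Omega0 U -> Omega0 V -> Omega0 (U `|` V)),
      (forall U V, Omega0 U -> Omega0 V -> Omega0 (U `&` V)) &
      (forall U, open U -> forall x, U x -> exists W, [/\ Omega0 W, W x & W `<=` U])].

Definition is_ideal (Omega0 : set (set T)) (I : set (set T)) :=
  [/\ (exists U, I U),
      I `<=` Omega0,
      (forall U W, I W -> Omega0 U -> U `<=` W -> I U) &
      (forall U V, I U -> I V -> exists W, [/\ I W, U `<=` W & V `<=` W])].

Definition ideal_join (Omega0 : set (set T)) (A : set (set (set T)))
    (J : set (set T)) :=
  [/\ is_ideal Omega0 J,
      (forall I, A I -> I `<=` J) &
      (forall L, is_ideal Omega0 L -> (forall I, A I -> I `<=` L) -> J `<=` L)].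

Definition ideal_meet (Omega0 : set (set T)) (I J K : set (set T)) :=
  [/\ is_ideal Omega0 K, K `<=` I, K `<=` J &
      (forall L, is_ideal Omega0 L -> L `<=` I -> L `<=` J -> L `<=` K)].

Definition cp_filter (Omega0 : set (set T)) (y : set (set (set T))) :=
  [/\ (forall I, y I -> is_ideal Omega0 I),
      (exists I, y I),
      (forall I J, y I -> is_ideal Omega0 J -> I `<=` J -> y J),
      (forall I J K, y I -> y J -> ideal_meet Omega0 I J K -> y K) &
      (forall A J, A `<=` is_ideal Omega0 -> ideal_join Omega0 A J -> y J ->
         exists I, A I /\ y I)].

Definition hatX (Omega0 : set (set T)) :=
  {y : set (set (set T)) | cp_filter Omega0 y}.

Definition hatO (Omega0 : set (set T)) (I : set (set T)) : set (hatX Omega0) :=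
  fun y => proj1_sig y I.

Definition downset (Omega0 : set (set T)) (W : set T) : set (set T) :=
  fun U => Omega0 U /\ U `<=` W.

(* continuity from \hat X_{Omega0} (opens: exactly the O_I, I ideal)
   into the Scott topology of (D, le) *)
Definition hat_scott_continuous (Omega0 : set (set T)) {D : Type}
    (le : D -> D -> Prop) (f : hatX Omega0 -> D) :=
  forall V, scott_open le V ->
    exists I, is_ideal Omega0 I /\ forall y, V (f y) <-> hatO Omega0 I y.

Definition fspace (Omega0 : set (set T)) {D : Type} (le : D -> D -> Prop) :=
  {f : hatX Omega0 -> D | hat_scott_continuous Omega0 le f}.

Definition fle (Omega0 : set (set T)) {D : Type} (le : D -> D -> Prop)
    (f g : fspace Omega0 le) :=
  forall y, le (proj1_sig f y) (proj1_sig g y).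

Definition consistent_family (Omega0 : set (set T)) {D : Type}
    (le : D -> D -> Prop) (n : nat) (b : 'I_n -> D) (W : 'I_n -> set T) :=
  forall J : set 'I_n,
    (exists y, forall j, J j -> hatO Omega0 (downset Omega0 (W j)) y) ->
    exists u, forall j, J j -> le (b j) u.

(* \hat B: the (pointwise) joins of finite consistent families of
   step functions b_i chi_{O_{down W_i}} with W_i in Omega0, b_i in D0;
   the empty join is bottom *)
Definition hatB (Omega0 : set (set T)) {D : Type} (le : D -> D -> Prop)
    (D0 : set D) (g : hatX Omega0 -> D) :=
  exists n (b : 'I_n -> D) (W : 'I_n -> set T),
    [/\ forall i, Omega0 (W i),
        forall i, D0 (b i),
        consistent_family Omega0 le n b W &
        forall y, is_lub le
          (fun d => exists i, hatO Omega0 (downset Omega0 (W i)) y /\ d = b i)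
          (g y)].

End Hat.

(* Main.v *)
Require Import Defs.
From mathcomp Require Import all_boot classical_sets topology boolp.
Local Open Scope classical_set_scope.

Section Dom.
Variables (D : Type) (le : D -> D -> Prop).
Hypothesis PO : partial_order le.

Lemma le_refl x : le x x. Proof. by case: PO. Qed.
Lemma le_trans {x y z} : le x y -> le y z -> le x z. Proof. by case: PO => _ H _; apply: H. Qed.
Lemma le_anti x y : le x y -> le y x -> x = y. Proof. by case: PO => _ _ H; apply: H. Qed.

Lemma lub_uniq A s s' : is_lub le A s -> is_lub le A s' -> s = s'.
Proof. by move=> [u1 l1] [u2 l2]; apply: le_anti; [apply: l1|apply: l2]. Qed.

Lemma dir_single x : directed le (fun d => d = x).
Proof. split; first by exists x. by move=> a b -> ->; exists x; split=> //; apply: le_refl. Qed.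

Lemma lub_single x : is_lub le (fun d => d = x) x.
Proof. split; first by move=> a ->; apply: le_refl. by move=> u H; apply: H. Qed.

Lemma wb_le {a x} : way_below le a x -> le a x.
Proof.
move=> H; have [a' [-> //]] := H _ _ (dir_single x) (lub_single x) (le_refl x).
Qed.

Lemma wb_mono {a a' x x'} : le a a' -> way_below le a' x -> le x x' -> way_below le a x'.
Proof.
move=> h1 h2 h3 A s dA lA h4.
have [a0 [Aa0 h5]] := h2 A s dA lA (le_trans h3 h4).
by exists a0; split=> //; apply: le_trans h5.
Qed.

Lemma wb_bot bot x : (forall y, le bot y) -> way_below le bot x.
Proof. by move=> hb A s [[a Aa] _] _ _; exists a. Qed.

Lemma wb_lub2 a1 a2 c x : way_below le a1 x -> way_below le a2 x ->
  is_lub le (fun d => d = a1 \/ d = a2) c -> way_below le c x.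
Proof.
move=> h1 h2 [_ hc] A s dA lA hx.
have [e1 [A1 l1]] := h1 A s dA lA hx.
have [e2 [A2 l2]] := h2 A s dA lA hx.
have [e3 [A3 l13 l23]] := dA.2 _ _ A1 A2.
exists e3; split=> //; apply: hc => d [->|->]; apply: le_trans; eassumption.
Qed.

Lemma basis_cont B : is_basis le B -> continuous_po le.
Proof.
move=> HB x; have [[[b0 [Bb0 wb0]] dB] [uB lB]] := HB x.
have step a : way_below le a x -> exists b, [/\ B b, way_below le b x & le a b].
  move=> wa; have [b [[Bb wb] ab]] := wa _ _ (conj (ex_intro _ b0 (conj Bb0 wb0)) dB)
     (conj uB lB) (le_refl x).
  by exists b.
split; first split.
- by exists b0.
- move=> a1 a2 h1 h2; have [b1 [B1 w1 l1]] := step _ h1; have [b2 [B2 w2 l2]] := step _ h2.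
  have [b3 [[B3 w3] l13 l23]] := dB _ _ (conj B1 w1) (conj B2 w2).
  by exists b3; split=> //; apply: le_trans; eassumption.
- split; first by move=> a; apply: wb_le.
  by move=> u hu; apply: lB => a [_ wa]; apply: hu.
Qed.

Hypothesis CP : continuous_po le.

Lemma interp {a x} : way_below le a x -> exists c, way_below le a c /\ way_below le c x.
Proof.
move=> wa.
pose S := fun d => exists c, way_below le d c /\ way_below le c x.
have dS : directed le S.
  have [[[c0 wc0] dx] _] := CP x.
  have [[[d0 wd0] _] _] := CP c0.
  split; first by exists d0, c0.
  move=> d1 d2 [c1 [w11 w1]] [c2 [w22 w2]].
  have [c3 [w3 l13 l23]] := dx _ _ w1 w2.
  have [[_ dc3] _] := CP c3.
  have [d3 [w33 l1 l2]] := dc3 _ _ (wb_mono (le_refl _) w11 l13) (wb_mono (le_refl _) w22 l23).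
  by exists d3; split=> //; exists c3.
have lS : is_lub le S x.
  split; first by move=> d [c [w1 w2]]; apply: le_trans (wb_le w1) (wb_le w2).
  move=> u hu; have [_ [_ lx]] := CP x; apply: lx => c wc.
  have [_ [_ lc]] := CP c; apply: lc => d wd; apply: hu; by exists c.
have [d [[c [w1 w2]] ad]] := wa S x dS lS (le_refl x).
by exists c; split=> //; apply: wb_mono w1 (le_refl _).
Qed.

Lemma wb_open a : scott_open le (way_below le a).
Proof.
split; first by move=> x y wx xy; apply: wb_mono (le_refl _) wx xy.
move=> A s dA lA wa; have [c [w1 w2]] := interp wa.
have [a0 [Aa0 ca0]] := w2 A s dA lA (le_refl s).
by exists a0; split=> //; apply: wb_mono (le_refl _) w1 ca0.
Qed.

Lemma open_approx V x : scott_open le V -> V x -> exists a, way_below le a x /\ V a.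
Proof. by move=> [_ hV] Vx; have [dx lx] := CP x; apply: hV dx lx Vx. Qed.

End Dom.
Set Implicit Arguments.
Unset Strict Implicit.

Section HatX.
Variables (T : topologicalType) (Omega0 : set (set T)).
Hypothesis VB : viable_base Omega0.

Local Notation dn := (downset Omega0).
Local Notation OO := (hatO Omega0).
Local Notation X := (hatX Omega0).

Lemma O0 : Omega0 set0. Proof. by case: VB => _ [] . Qed.
Lemma OU U V : Omega0 U -> Omega0 V -> Omega0 (U `|` V). Proof. by case: VB => _ _ H _ _; apply: H. Qed.
Lemma OI U V : Omega0 U -> Omega0 V -> Omega0 (U `&` V). Proof. by case: VB => _ _ _ H _; apply: H. Qed.

Lemma ideal_sub I : is_ideal Omega0 I -> I `<=` Omega0. Proof. by case. Qed.
Lemma ideal_down I U W : is_ideal Omega0 I -> I W -> Omega0 U -> U `<=` W -> I U.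
Proof. by case=> _ _ H _; apply: H. Qed.
Lemma ideal0 I : is_ideal Omega0 I -> I set0.
Proof. move=> iI; case: (iI) => [[U IU] _ _ _]; apply: ideal_down iI IU O0 _; by []. Qed.
Lemma idealU I U V : is_ideal Omega0 I -> I U -> I V -> I (U `|` V).
Proof.
move=> iI IU IV; case: (iI) => _ sub _ dir; have [W [IW sU sV]] := dir _ _ IU IV.
apply: ideal_down iI IW (OU (sub _ IU) (sub _ IV)) _; by move=> x [/sU|/sV].
Qed.

Lemma ideal_dn W : Omega0 W -> is_ideal Omega0 (dn W).
Proof.
move=> oW; split.
- by exists set0; split; [exact: O0|].
- by move=> U [].
- by move=> U W' [oW' s] oU sUW; split=> //; move=> x /sUW /s.
- move=> U V [oU sU] [oV sV]; exists (U `|` V); split.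
  + by split; [exact: OU|move=> x [/sU|/sV]].
  + by move=> x hx; left.
  + by move=> x hx; right.
Qed.

Lemma ideal_inter I J : is_ideal Omega0 I -> is_ideal Omega0 J -> is_ideal Omega0 (I `&` J).
Proof.
move=> iI iJ; split.
- by exists set0; split; apply: ideal0.
- by move=> U [/(ideal_sub iI)].
- by move=> U W [IW JW] oU s; split; [apply: ideal_down iI IW oU s|apply: ideal_down iJ JW oU s].
- move=> U V [IU JU] [IV JV]; exists (U `|` V); split.
  + by split; apply: idealU.
  + by move=> x hx; left.
  + by move=> x hx; right.
Qed.

Lemma cpP (y : X) : cp_filter Omega0 (proj1_sig y). Proof. exact: proj2_sig y. Qed.

Lemma O_ideal y I : OO I y -> is_ideal Omega0 I.
Proof. by case: (cpP y) => H _ _ _ _; apply: H. Qed.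

Lemma O_up y I J : OO I y -> is_ideal Omega0 J -> I `<=` J -> OO J y.
Proof. by case: (cpP y) => _ _ H _ _; apply: H. Qed.

Lemma O_cover y I : OO I y -> exists U, I U /\ OO (dn U) y.
Proof.
move=> yI; have iI := O_ideal yI.
case: (cpP y) => _ _ _ _ cp.
pose A := fun J => exists U, I U /\ J = dn U.
have hA : A `<=` is_ideal Omega0 by move=> J [U [IU ->]]; apply: ideal_dn; apply: (ideal_sub iI).
have jA : ideal_join Omega0 A I.
  split=> //.
  - by move=> J [U [IU ->]] V [oV sV]; apply: ideal_down iI IU oV sV.
  - move=> L iL hL U IU; apply: (hL (dn U)); first by exists U.
    by split=> //; apply: (ideal_sub iI).
have [J [[U [IU ->]] yJ]] := cp A I hA jA yI.
by exists U.
Qed.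

Lemma O_dn_sub y U I : is_ideal Omega0 I -> I U -> OO (dn U) y -> OO I y.
Proof. by move=> iI IU yU; apply: (O_up yU iI) => V [oV sV]; apply: ideal_down iI IU oV sV. Qed.

Lemma O_dn_mono y U V : Omega0 V -> U `<=` V -> OO (dn U) y -> OO (dn V) y.
Proof.
move=> oV s yU; apply: (O_up yU (ideal_dn oV)); by move=> W [oW sW]; split=> //; move=> x /sW /s.
Qed.

Lemma O_dn0 y : ~ OO (dn set0) y.
Proof.
move=> y0; case: (cpP y) => _ _ _ _ cp.
have jA : ideal_join Omega0 (fun _ => False) (dn set0).
  split=> //; first exact: (ideal_dn O0).
  move=> L iL _ U [oU sU]; apply: ideal_down iL (ideal0 iL) oU sU.
by have [J [[] _]] := cp _ _ (fun J (f : False) => match f with end) jA y0.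
Qed.

Lemma O_dnU y U V : Omega0 U -> Omega0 V -> OO (dn (U `|` V)) y -> OO (dn U) y \/ OO (dn V) y.
Proof.
move=> oU oV yUV; case: (cpP y) => _ _ _ _ cp.
pose A := fun J => J = dn U \/ J = dn V.
have hA : A `<=` is_ideal Omega0 by move=> J [->|->]; apply: ideal_dn.
have jA : ideal_join Omega0 A (dn (U `|` V)).
  split; first exact: (ideal_dn (OU oU oV)).
  - move=> J [->|->] W [oW sW]; split=> //; move=> x /sW; by [left|right].
  - move=> L iL hL W [oW sW].
    have LU : L U by apply: (hL (dn U)); [left|split].
    have LV : L V by apply: (hL (dn V)); [right|split].
    by apply: ideal_down iL (idealU iL LU LV) oW sW.
by have [J [[->|->] yJ]] := cp A _ hA jA yUV; [left|right].
Qed.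

Lemma O_dnI y U V : Omega0 U -> Omega0 V -> OO (dn U) y -> OO (dn V) y -> OO (dn (U `&` V)) y.
Proof.
move=> oU oV yU yV; case: (cpP y) => _ _ _ cm _.
apply: cm yU yV _; split.
- exact: (ideal_dn (OI oU oV)).
- by move=> W [oW sW]; split=> //; move=> x /sW [].
- by move=> W [oW sW]; split=> //; move=> x /sW [].
- by move=> L iL h1 h2 W LW; have [oW s1] := h1 _ LW; have [_ s2] := h2 _ LW; split=> // x hx; split; [apply: s1|apply: s2].
Qed.

Lemma O_all y : exists U, Omega0 U /\ OO (dn U) y.
Proof.
case: (cpP y) => _ [I yI] _ _ _; have [U [IU yU]] := O_cover yI.
by exists U; split=> //; apply: (ideal_sub (O_ideal yI)).
Qed.

Definition hopen (P : set X) := forall y, P y ->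
  exists U, [/\ Omega0 U, OO (dn U) y & forall z, OO (dn U) z -> P z].

Lemma hopen_ideal P : hopen P -> exists I, is_ideal Omega0 I /\ forall y, P y <-> OO I y.
Proof.
move=> hP; pose I := fun U => Omega0 U /\ forall z, OO (dn U) z -> P z.
have iI : is_ideal Omega0 I.
  split.
  - by exists set0; split; [exact: O0|move=> z /O_dn0].
  - by move=> U [].
  - by move=> U W [oW hW] oU s; split=> // z hz; apply: hW; apply: O_dn_mono oW s hz.
  - move=> U V [oU hU] [oV hV]; exists (U `|` V); split.
    + split; first exact: OU.
      by move=> z /(O_dnU oU oV) [/hU|/hV].
    + by move=> x hx; left.
    + by move=> x hx; right.
exists I; split=> // y; split.
- by move=> /hP [U [oU yU hU]]; apply: O_dn_sub iI _ yU.
- by move=> /O_cover [U [[oU hU] yU]]; apply: hU.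
Qed.

Lemma ideal_hopen I : is_ideal Omega0 I -> hopen (OO I).
Proof.
move=> iI y /O_cover [U [IU yU]]; exists U; split=> //; first exact: (ideal_sub iI).
by move=> z; apply: O_dn_sub.
Qed.

Lemma hopen_ext P Q : (forall y, P y <-> Q y) -> hopen P -> hopen Q.
Proof.
move=> e hP y /e /hP [U [oU yU hU]]; exists U; split=> // z /hU; by move/e.
Qed.

Lemma hopenI P Q : hopen P -> hopen Q -> hopen (P `&` Q).
Proof.
move=> hP hQ y [/hP [U [oU yU hU]] /hQ [V [oV yV hV]]].
exists (U `&` V); split; first exact: OI.
- exact: O_dnI.
- move=> z hz; split; [apply: hU|apply: hV]; apply: O_dn_mono hz => //; by move=> x [].
Qed.

Lemma hopen_const (p : Prop) : hopen (fun _ => p).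
Proof. by move=> y py; have [U [oU yU]] := O_all y; exists U. Qed.

Lemma hopen_dn U : Omega0 U -> hopen (OO (dn U)).
Proof. by move=> oU y yU; exists U. Qed.

Lemma hopen_impl (p : Prop) P : hopen P -> hopen (fun z => p -> P z).
Proof.
move=> hP; case: (EM p) => hp.
- by apply: (hopen_ext _ hP) => y; split=> // H; apply: H.
- by apply: (hopen_ext _ (@hopen_const True)) => y; split.
Qed.

Lemma hopen_big n (P : 'I_n -> set X) : (forall i, hopen (P i)) -> hopen (fun z => forall i, P i z).
Proof.
move=> hP.
have H (s : seq 'I_n) : hopen (fun z => forall i, i \in s -> P i z).
  elim: s => [|a s IH].
    by apply: (hopen_ext _ (@hopen_const True)) => y; split.
  apply: (hopen_ext _ (hopenI (hP a) IH)) => y; split.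
  - move=> [h1 h2] i; rewrite in_cons => /orP [/eqP -> //|]; exact: h2.
  - move=> h; split; first by apply: h; rewrite in_cons eqxx.
    by move=> i hi; apply: h; rewrite in_cons hi orbT.
apply: (hopen_ext _ (H (enum 'I_n))) => y; split.
- by move=> h i; apply: h; rewrite mem_enum.
- by move=> h i _.
Qed.

End HatX.

Section Prime.
Variables (T : topologicalType) (Omega0 : set (set T)).
Hypothesis VB : viable_base Omega0.

Local Notation dn := (downset Omega0).
Local Notation OO := (hatO Omega0).
Local Notation X := (hatX Omega0).

Fixpoint bigU (s : seq (set T)) : set T := if s is x :: s' then x `|` bigU s' else set0.
Fixpoint allin (A : set (set (set T))) (s : seq (set T)) : Prop :=
  if s is x :: s' then (exists I, A I /\ I x) /\ allin A s' else True.

Lemma bigU_catl s1 s2 : bigU s1 `<=` bigU (s1 ++ s2).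
Proof. elim: s1 => [|a s IH] /= x //; case=> h; [by left|by right; apply: IH]. Qed.
Lemma bigU_catr s1 s2 : bigU s2 `<=` bigU (s1 ++ s2).
Proof. elim: s1 => [|a s IH] /= x // h; right; exact: IH. Qed.
Lemma allin_cat A s1 s2 : allin A s1 -> allin A s2 -> allin A (s1 ++ s2).
Proof. by elim: s1 => [|a s IH] //= [h1 h2] h3; split=> //; apply: IH. Qed.
Lemma allin_O A s : A `<=` is_ideal Omega0 -> allin A s -> Omega0 (bigU s).
Proof.
move=> hA; elim: s => [|a s IH] /=; first by move=> _; apply: (O0 VB).
move=> [[I [AI Ia]] h]; apply: (OU VB) (IH h).
exact: (ideal_sub (hA _ AI)).
Qed.

Variables (W : set T) (J : set (set T)).
Hypothesis oW : Omega0 W.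
Hypothesis iJ : is_ideal Omega0 J.
Hypothesis nJW : ~ J W.

Definition filt (F : set (set T)) :=
  [/\ F `<=` Omega0, (forall U V, F U -> Omega0 V -> U `<=` V -> F V),
      (forall U V, F U -> F V -> F (U `&` V)), (forall U, F U -> ~ J U) & F W].

Definition upW := fun V => Omega0 V /\ W `<=` V.

Lemma filt_upW : filt upW.
Proof.
split.
- by move=> U [].
- by move=> U V [oU sU] oV s; split=> //; move=> x /sU /s.
- by move=> U V [oU sU] [oV sV]; split; [apply: (OI VB)|move=> x hx; split; [apply: sU|apply: sV]].
- by move=> U [oU sU] JU; apply: nJW; apply: (ideal_down iJ JU oW sU).
- by split.
Qed.

Lemma max_filt : exists A, filt A /\ forall B, A `<` B -> ~ filt B.
Proof.
pose P := fun F => (forall U, ~ F U) \/ filt F.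
have [A [PA mA]] : exists A, P A /\ forall B, A `<` B -> ~ P B.
  apply: Zorn_bigcup => F FP tF.
  case: (EM (exists X, F X /\ exists U, X U)) => [[X0 [FX0 [U0 X0U0]]]|ne]; last first.
    by left=> U [X FX XU]; apply: ne; exists X; split=> //; exists U.
  have hF Y U : F Y -> Y U -> filt Y.
    by move=> FY YU; case: (FP _ FY) => // h; case: (h U).
  right; split.
  - by move=> U [Y FY YU]; case: (hF _ _ FY YU) => h _ _ _ _; apply: h.
  - move=> U V [Y FY YU] oV s; exists Y => //.
    by case: (hF _ _ FY YU) => _ h _ _ _; apply: h YU oV s.
  - move=> U V [Y1 F1 Y1U] [Y2 F2 Y2V].
    case: (tF _ _ F1 F2) => s.
    + exists Y2 => //; case: (hF _ _ F2 Y2V) => _ _ h _ _; apply: h (s _ Y1U) Y2V.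
    + exists Y1 => //; case: (hF _ _ F1 Y1U) => _ _ h _ _; apply: h Y1U (s _ Y2V).
  - by move=> U [Y FY YU]; case: (hF _ _ FY YU) => _ _ _ h _; apply: h.
  - by exists X0 => //; case: (hF _ _ FX0 X0U0).
exists A; split; last by move=> B AB fB; apply: (mA B AB); right.
case: PA => // hA; exfalso; apply: (mA upW); last by right; exact: filt_upW.
split; first by move=> U /hA.
by move=> h; apply: (hA W); apply: h; split.
Qed.

Lemma prime_sep : exists y : X, OO (dn W) y /\ ~ OO J y.
Proof.
have [A [[sA upA capA disA AW] mA]] := max_filt.
have ext U : Omega0 U -> ~ A U -> exists g j, [/\ A g, J j & g `&` U `<=` j].
  move=> oU nAU; apply: contrapT => nex.
  pose FA := fun C => Omega0 C /\ exists g, A g /\ g `&` U `<=` C.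
  apply: (mA FA); last first.
    split.
    - by move=> C [].
    - by move=> C V [oC [g [Ag s]]] oV s'; split=> //; exists g; split=> //; move=> x /s /s'.
    - move=> C1 C2 [o1 [g1 [A1 s1]]] [o2 [g2 [A2 s2]]]; split; first exact: (OI VB).
      exists (g1 `&` g2); split; first exact: capA.
      by move=> x [[x1 x2] xU]; split; [apply: s1|apply: s2].
    - by move=> C [oC [g [Ag s]]] JC; apply: nex; exists g, C.
    - by split=> //; exists W; split=> //; move=> x [].
  split.
  - by move=> g Ag; split; [apply: (sA)|exists g; split=> //; move=> x []].
  - move=> h; apply: nAU; apply: h; split=> //; exists W; split=> //; move=> x [].
have prime U V : Omega0 U -> Omega0 V -> A (U `|` V) -> A U \/ A V.
  move=> oU oV AUV; case: (EM (A U)) => [|nU]; first by left.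
  case: (EM (A V)) => [|nV]; first by right.
  have [g1 [j1 [A1 J1 s1]]] := ext _ oU nU.
  have [g2 [j2 [A2 J2 s2]]] := ext _ oV nV.
  have Ag : A ((g1 `&` g2) `&` (U `|` V)) by apply: (capA) => //; apply: (capA).
  exfalso; apply: (disA _ Ag).
  apply: (ideal_down iJ (idealU VB iJ J1 J2) (sA _ Ag)).
  by move=> x [[x1 x2] [xU|xV]]; [left; apply: s1|right; apply: s2].
pose y := fun I => is_ideal Omega0 I /\ exists U, I U /\ A U.
have cpy : cp_filter Omega0 y.
  split.
  - by move=> I [].
  - by exists (dn W); split; [apply: (ideal_dn VB)|exists W; split; [split|]].
  - by move=> I I' [iI [U [IU AU]]] iI' s; split=> //; exists U; split=> //; apply: s.
  - move=> I1 I2 K [i1 [U [IU AU]]] [i2 [V [IV AV]]] [iK K1 K2 Km]; split=> //.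
    exists (U `&` V); split; last exact: capA.
    apply: (Km _ (ideal_inter VB i1 i2)); [by move=> x []|by move=> x []|].
    have oUV := OI VB (ideal_sub i1 IU) (ideal_sub i2 IV).
    split; [apply: (ideal_down i1 IU oUV)|apply: (ideal_down i2 IV oUV)]; by move=> x [].
  - move=> Af J0 hA [iJ0 hsub hmin] [_ [U [J0U AU]]].
    pose G := fun V => Omega0 V /\ exists s, allin Af s /\ V `<=` bigU s.
    have iG : is_ideal Omega0 G.
      split.
      + by exists set0; split; [apply: (O0 VB)|exists [::]; split].
      + by move=> V [].
      + by move=> V V' [o' [s [hs ss]]] oV sV; split=> //; exists s; split=> //; move=> x /sV /ss.
      + move=> V1 V2 [o1 [s1 [h1 ss1]]] [o2 [s2 [h2 ss2]]]; exists (V1 `|` V2); split.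
        * split; first exact: (OU VB).
          exists (s1 ++ s2); split; first exact: allin_cat.
          by move=> x [/ss1/bigU_catl|/ss2/bigU_catr].
        * by move=> x hx; left.
        * by move=> x hx; right.
    have J0G : J0 `<=` G.
      apply: hmin => // I AI V IV; split; first exact: (ideal_sub (hA _ AI)).
      by exists [:: V]; split; [split=> //; exists I|move=> x hx; left].
    have [_ [s [hs ss]]] := J0G _ J0U.
    have As : A (bigU s) by apply: upA AU (allin_O hA hs) ss.
    elim: s hs As {ss} => [|a s IH] /= hs As.
      by exfalso; apply: (disA _ As); apply: (ideal0 VB iJ).
    case: hs => [[I [AI Ia]] hs].
    have oa : Omega0 a := ideal_sub (hA _ AI) Ia.
    case: (prime _ _ oa (allin_O hA hs) As) => [Aa|Ar]; last exact: IH.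
    by exists I; split=> //; split; [apply: hA|exists a].
exists (exist _ y cpy); split.
- by split; [apply: (ideal_dn VB)|exists W; split; [split|]].
- by move=> [_ [U [JU AU]]]; apply: (disA _ AU).
Qed.

End Prime.

Section FS.
Variables (T : topologicalType) (Omega0 : set (set T)).
Hypothesis VB : viable_base Omega0.
Variables (D : Type) (le : D -> D -> Prop).
Hypothesis PO : partial_order le.
Hypothesis DC : forall A, directed le A -> exists s, is_lub le A s.
Variable bot : D.
Hypothesis hbot : forall x, le bot x.
Hypothesis CP : continuous_po le.
Hypothesis BND : forall A, (exists u, is_ub le A u) -> exists s, is_lub le A s.

Local Notation dn := (downset Omega0).
Local Notation OO := (hatO Omega0).
Local Notation X := (hatX Omega0).
Local Notation F := (fspace Omega0 le).
Local Notation fle := (fle Omega0 le).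
Local Notation ltr := (le_trans D le PO).
Local Notation lrefl := (le_refl D le PO).

Lemma cont_hopen (f : X -> D) : hat_scott_continuous Omega0 le f <->
  forall V, scott_open le V -> hopen (fun y => V (f y)).
Proof.
split.
- move=> hf V sV; have [I [iI H]] := hf V sV.
  apply: (hopen_ext (P := OO I)); first by move=> y; split => /H.
  exact: (ideal_hopen VB iI).
- by move=> H V sV; apply: (hopen_ideal VB); apply: H.
Qed.

Lemma fcont (f : F) V : scott_open le V -> hopen (fun y => V (sval f y)).
Proof. by move=> sV; apply/(proj1 (cont_hopen _) (proj2_sig f)). Qed.

Lemma const_cont c : hat_scott_continuous Omega0 le (fun _ => c).
Proof. by apply/cont_hopen => V _; apply: (@hopen_const _ _ VB (V c)). Qed.

Lemma fle_po : partial_order fle.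
Proof.
split.
- by move=> f y; rewrite /Defs.fle; apply: (le_refl D le PO).
- by move=> f g h h1 h2 y; apply: ltr (h1 y) (h2 y).
- move=> [f hf] [g hg] h1 h2; apply: eq_exist; apply: funext => y.
  by apply: (le_anti D le PO); [apply: h1|apply: h2].
Qed.

Definition pwlub (A : set F) (s : F) :=
  forall y, is_lub le (fun d => exists f, A f /\ d = sval f y) (sval s y).

Lemma pw_lub A s : pwlub A s -> is_lub fle A s.
Proof.
move=> H; split.
- by move=> f Af y; apply: (H y).1; exists f.
- by move=> u hu y; apply: (H y).2 => d [f [Af ->]]; apply: hu.
Qed.

Lemma fle_lub_pw A s s' : is_lub fle A s -> pwlub A s' -> s = s'.
Proof. by move=> h1 h2; apply: (lub_uniq _ _ fle_po _ _ _ h1 (pw_lub h2)). Qed.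

Lemma dir_lub (A : set F) : directed fle A -> exists s, pwlub A s.
Proof.
move=> [[f0 Af0] dA].
have dy y : directed le (fun d => exists f, A f /\ d = sval f y).
  split; first by exists (sval f0 y), f0.
  move=> a b [f1 [A1 ->]] [f2 [A2 ->]]; have [f3 [A3 l1 l2]] := dA _ _ A1 A2.
  by exists (sval f3 y); split; [exists f3|apply: l1|apply: l2].
have [g hg] := choice (fun y => DC (dy y)).
have gc : hat_scott_continuous Omega0 le g.
  apply/cont_hopen => V sV y Vgy.
  have [a [[f [Af ->]] Vf]] := sV.2 _ _ (dy y) (hg y) Vgy.
  have [U [oU yU hU]] := fcont (f:=f) sV Vf.
  exists U; split=> // z /hU Vfz; apply: sV.1 Vfz _.
  by apply: (hg z).1; exists f.
by exists (exist _ g gc).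
Qed.

Lemma pair_lub_ex a1 a2 u : le a1 u -> le a2 u -> exists c, is_lub le (fun d => d = a1 \/ d = a2) c.
Proof. by move=> h1 h2; apply: BND; exists u => d [->|->]. Qed.

Lemma bin_lub (f1 f2 : F) (h : X -> D) : (forall y, le (sval f1 y) (h y)) ->
  (forall y, le (sval f2 y) (h y)) ->
  exists g : F, forall y, is_lub le (fun d => d = sval f1 y \/ d = sval f2 y) (sval g y).
Proof.
move=> h1 h2.
have [g hg] := choice (fun y => pair_lub_ex (h1 y) (h2 y)).
have gc : hat_scott_continuous Omega0 le g.
  apply/cont_hopen => V sV y Vgy.
  pose S := fun c => exists a1 a2, [/\ way_below le a1 (sval f1 y), way_below le a2 (sval f2 y)
     & is_lub le (fun d => d = a1 \/ d = a2) c].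
  have ub1 a1 : way_below le a1 (sval f1 y) -> le a1 (g y).
    by move=> w; apply: ltr (wb_le D le PO w) _; apply: (hg y).1; left.
  have ub2 a2 : way_below le a2 (sval f2 y) -> le a2 (g y).
    by move=> w; apply: ltr (wb_le D le PO w) _; apply: (hg y).1; right.
  have [[[a10 w10] d1] l1] := CP (sval f1 y).
  have [[[a20 w20] d2] l2] := CP (sval f2 y).
  have dS : directed le S.
    split.
      have [c hc] := pair_lub_ex (ub1 _ w10) (ub2 _ w20).
      by exists c, a10, a20.
    move=> c c' [a1 [a2 [w1 w2 hc]]] [a1' [a2' [w1' w2' hc']]].
    have [b1 [wb1 l11 l12]] := d1 _ _ w1 w1'.
    have [b2 [wb2 l21 l22]] := d2 _ _ w2 w2'.
    have [c'' hc''] := pair_lub_ex (ub1 _ wb1) (ub2 _ wb2).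
    exists c''; split; first by exists b1, b2.
    + apply: hc.2 => d [->|->]; [apply: ltr l11 _|apply: ltr l21 _]; apply: hc''.1; by [left|right].
    + apply: hc'.2 => d [->|->]; [apply: ltr l12 _|apply: ltr l22 _]; apply: hc''.1; by [left|right].
  have lS : is_lub le S (g y).
    split.
      by move=> c [a1 [a2 [w1 w2 hc]]]; apply: hc.2 => d [->|->]; [apply: ub1|apply: ub2].
    move=> u hu; apply: (hg y).2 => d [->|->].
    - apply: l1.2 => a1 w1; have [c hc] := pair_lub_ex (ub1 _ w1) (ub2 _ w20).
      apply: ltr (hu c _); first by apply: hc.1; left.
      by exists a1, a20.
    - apply: l2.2 => a2 w2; have [c hc] := pair_lub_ex (ub1 _ w10) (ub2 _ w2).
      apply: ltr (hu c _); first by apply: hc.1; right.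
      by exists a10, a2.
  have [c [[a1 [a2 [w1 w2 hc]]] Vc]] := sV.2 _ _ dS lS Vgy.
  have o1 := fcont (f:=f1) (wb_open D le PO CP a1).
  have o2 := fcont (f:=f2) (wb_open D le PO CP a2).
  have [U [oU yU hU]] := hopenI VB o1 o2 (conj w1 w2).
  exists U; split=> // z /hU [z1 z2]; apply: sV.1 Vc _.
  apply: hc.2 => d [->|->]; [apply: ltr (wb_le D le PO z1) _|apply: ltr (wb_le D le PO z2) _];
    apply: (hg z).1; by [left|right].
by exists (exist _ g gc).
Qed.

Definition fbot : F := exist _ (fun _ => bot) (const_cont bot).

Lemma fbot_le f : fle fbot f. Proof. by move=> y; apply: hbot. Qed.

Lemma bnd_lub (A : set F) : (exists h, is_ub fle A h) -> exists s, is_lub fle A s.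
Proof.
move=> [h hh].
have ex y : exists s, is_lub le (fun d => exists f, A f /\ d = sval f y) s.
  by apply: BND; exists (sval h y) => d [f [Af ->]]; apply: hh.
have [L hL] := choice ex.
pose C := fun g : F => forall y, le (sval g y) (L y).
have dC : directed fle C.
  split; first by exists fbot => y; apply: hbot.
  move=> g1 g2 C1 C2; have [g hg] := bin_lub C1 C2.
  exists g; split.
  - by move=> y; apply: (hg y).2 => d [->|->]; [apply: C1|apply: C2].
  - by move=> y; apply: (hg y).1; left.
  - by move=> y; apply: (hg y).1; right.
have [M hM] := dir_lub dC.
exists M; apply: pw_lub => y.
suff -> : sval M y = L y by [].
apply: (le_anti D le PO).
- by apply: (hM y).2 => d [g [Cg ->]]; apply: Cg.
- apply: (hL y).2 => d [f [Af ->]]; apply: (hM y).1; exists f; split=> //.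
  by move=> z; apply: (hL z).1; exists f.
Qed.


Lemma dir_pw (A : set F) : directed fle A -> forall y,
  directed le (fun d => exists f, A f /\ d = sval f y).
Proof.
move=> [[f0 Af0] dA] y.
split; first by exists (sval f0 y), f0.
move=> a b [f1 [A1 ->]] [f2 [A2 ->]]; have [f3 [A3 l1 l2]] := dA _ _ A1 A2.
by exists (sval f3 y); split; [exists f3|apply: l1|apply: l2].
Qed.

Lemma hatB_cont D0 g : hatB Omega0 le D0 g -> hat_scott_continuous Omega0 le g.
Proof.
move=> [n [b [W [oW _ _ hl]]]].
apply/cont_hopen => V sV y Vgy.
pose Q := fun z => forall i, OO (dn (W i)) y -> OO (dn (W i)) z.
have hQ : hopen Q.
  rewrite /Q; apply: (hopen_big VB (P := fun i z => OO (dn (W i)) y -> OO (dn (W i)) z)) => i; exact: (hopen_impl VB (p := OO (dn (W i)) y) (hopen_dn (oW i))).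
have [U [oU yU hU]] := hQ y (fun i h => h).
exists U; split=> // z /hU Qz; apply: sV.1 Vgy _.
by apply: (hl y).2 => d [i [yi ->]]; apply: (hl z).1; exists i; split=> //; exact: Qz i yi.
Qed.

Definition step (b : D) (W : set T) : X -> D :=
  fun y => if pselect (OO (dn W) y) then b else bot.

Lemma step_hatB D0 b W : Omega0 W -> D0 b -> hatB Omega0 le D0 (step b W).
Proof.
move=> oW Db; exists 1, (fun _ => b), (fun _ => W); split=> //.
- by move=> J _; exists b => j _; apply: (le_refl D le PO).
- move=> y; rewrite /step; case: pselect => h; split.
  + by move=> d [i [_ ->]]; apply: (le_refl D le PO).
  + by move=> u hu; apply: hu; exists ord0.
  + by move=> d [i [hi _]].
  + by move=> u _; apply: hbot.
Qed.

Lemma step_cont b W : Omega0 W -> hat_scott_continuous Omega0 le (step b W).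
Proof. by move=> oW; apply: (@hatB_cont (fun _ => True)); apply: step_hatB. Qed.

Definition fstep b W (oW : Omega0 W) : F := exist _ (step b W) (step_cont b oW).

Lemma step_wb (f : F) b W (oW : Omega0 W) :
  (forall y, OO (dn W) y -> way_below le b (sval f y)) -> way_below fle (fstep b oW) f.
Proof.
move=> hb A s dA lA fs.
have [s' hs'] := dir_lub dA.
have es := fle_lub_pw lA hs'; rewrite -es in hs'.
pose Js := fun U => Omega0 U /\ exists k, A k /\ forall z, OO (dn U) z -> way_below le b (sval k z).
have [[k0 Ak0] dA'] := dA.
have iJ : is_ideal Omega0 Js.
  split.
  - exists set0; split; first exact: (O0 VB).
    by exists k0; split=> // z /(O_dn0 VB).
  - by move=> U [].
  - move=> U U' [o' [k [Ak hk]]] oU sU; split=> //; exists k; split=> // z hz; apply: hk.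
    exact: (O_dn_mono VB o' sU hz).
  - move=> U1 U2 [o1 [k1 [A1 h1]]] [o2 [k2 [A2 h2]]]; have [k3 [A3 l1 l2]] := dA' _ _ A1 A2.
    exists (U1 `|` U2); split.
    + split; first exact: (OU VB).
      exists k3; split=> // z /(O_dnU VB o1 o2) [/h1 w|/h2 w].
      * exact: (wb_mono D le PO (le_refl D le PO b) w (l1 z)).
      * exact: (wb_mono D le PO (le_refl D le PO b) w (l2 z)).
    + by move=> x hx; left.
    + by move=> x hx; right.
case: (EM (Js W)) => [[_ [k [Ak hk]]]|nJ].
  exists k; split=> // y; rewrite /= /step; case: pselect => h.
  - exact: (wb_le D le PO (hk y h)).
  - exact: hbot.
have [y [yW nyJ]] := prime_sep VB oW iJ nJ.
exfalso; apply: nyJ.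
have wy := hb y yW.
have [c [w1 w2]] := interp D le PO CP wy.
have [a [[k [Ak ->]] ca]] := w2 _ _ (dir_pw dA y) (hs' y) (fs y).
have wk : way_below le b (sval k y) := wb_mono D le PO (le_refl D le PO b) w1 ca.
have [U [oU yU hU]] := fcont (f:=k) (wb_open D le PO CP b) wk.
apply: (O_dn_sub iJ _ yU); split=> //; exists k; split=> //.
Qed.

Lemma fbot_hatB D0 : hatB Omega0 le D0 (fun _ => bot).
Proof.
exists 0, (fun _ => bot), (fun _ => set0); split.
- by case.
- by case.
- by move=> J _; exists bot => -[].
- move=> y; split; first by move=> d [[]].
  by move=> u _; apply: hbot.
Qed.

Lemma basis_fle D0 : is_basis le D0 -> is_basis fle (fun g : F => hatB Omega0 le D0 (sval g)).
Proof.
move=> HD f.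
split; first split.
- exists fbot; split; first exact: fbot_hatB.
  exact: (wb_bot _ (fle) fbot f (fun g => fbot_le g)).
- move=> g1 g2 [[n1 [b1 [W1 [o1 d1 c1 l1]]]] w1] [[n2 [b2 [W2 [o2 d2 c2 l2]]]] w2].
  have f1 := wb_le _ _ fle_po w1; have f2 := wb_le _ _ fle_po w2.
  have [g hg] := bin_lub f1 f2.
  have lg : is_lub fle (fun d => d = g1 \/ d = g2) g.
    split; first by move=> d [->|->] y; apply: (hg y).1; [left|right].
    by move=> u hu y; apply: (hg y).2 => d [->|->]; apply: hu; [left|right].
  exists g; split; first split.
  + exists (n1 + n2), (fun i => match split i with inl j => b1 j | inr j => b2 j end),
      (fun i => match split i with inl j => W1 j | inr j => W2 j end); split.
    * by move=> i; case: (split i).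
    * by move=> i; case: (split i).
    * move=> J [y hy]; exists (sval f y) => j Jj; move: (hy j Jj); case: (split j) => j' h.
      - apply: (le_trans D le PO) (f1 y); apply: (l1 y).1; by exists j'.
      - apply: (le_trans D le PO) (f2 y); apply: (l2 y).1; by exists j'.
    * move=> y; split.
      - move=> d [i [hi ->]]; move: hi; case: (split i) => j h.
        + apply: (le_trans D le PO) ((hg y).1 _ (or_introl erefl)); apply: (l1 y).1; by exists j.
        + apply: (le_trans D le PO) ((hg y).1 _ (or_intror erefl)); apply: (l2 y).1; by exists j.
      - move=> u hu; apply: (hg y).2 => e [->|->].
        + apply: (l1 y).2 => d [j [hj ->]]; apply: hu; exists (unsplit (inl j)).
          by rewrite unsplitK.
        + apply: (l2 y).2 => d [j [hj ->]]; apply: hu; exists (unsplit (inr j)).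
          by rewrite unsplitK.
  + exact: (wb_lub2 _ _ fle_po _ _ _ _ w1 w2 lg).
  + by move=> y; apply: (hg y).1; left.
  + by move=> y; apply: (hg y).1; right.
- split; first by move=> g [_ w]; exact: (wb_le _ _ fle_po w).
  move=> u hu y; have [_ [_ ly]] := HD (sval f y); apply: ly => d [Dd wd].
  have [U [oU yU hU]] := fcont (f:=f) (wb_open D le PO CP d) wd.
  have : fle (fstep d oU) u.
    apply: hu; split; first exact: step_hatB.
    by apply: step_wb => z /hU.
  by move/(_ y); rewrite /= /step; case: pselect.
Qed.

Lemma code_le (gB : D -> nat) (gO : set T -> nat) (B : set D)
  (hgB : forall a b, B a -> B b -> gB a = gB b -> a = b)
  (hgO : forall a b, Omega0 a -> Omega0 b -> gO a = gO b -> a = b)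
  n1 (b1 : 'I_n1 -> D) W1 n2 (b2 : 'I_n2 -> D) W2 (f1 f2 : F) :
  (forall i, Omega0 (W1 i)) -> (forall i, B (b1 i)) ->
  (forall i, Omega0 (W2 i)) -> (forall i, B (b2 i)) ->
  (forall y, is_lub le (fun d => exists i, OO (dn (W1 i)) y /\ d = b1 i) (sval f1 y)) ->
  (forall y, is_lub le (fun d => exists i, OO (dn (W2 i)) y /\ d = b2 i) (sval f2 y)) ->
  [seq (gB (b1 i), gO (W1 i)) | i <- enum 'I_n1] = [seq (gB (b2 i), gO (W2 i)) | i <- enum 'I_n2] ->
  fle f1 f2.
Proof.
move=> o1 B1 o2 B2 l1 l2 e y; apply: (l1 y).2 => d [i [hi ->]].
have : (gB (b1 i), gO (W1 i)) \in [seq (gB (b1 i), gO (W1 i)) | i <- enum 'I_n1].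
  by apply: map_f; rewrite mem_enum.
rewrite e => /mapP [i2 _ [eb eW]].
have -> := hgB _ _ (B1 i) (B2 i2) eb.
apply: (l2 y).1; exists i2; split=> //.
by rewrite -(hgO _ _ (o1 i) (o2 i2) eW).
Qed.

End FS.
Unset Implicit Arguments.

Theorem mainTheorem16 (T : topologicalType) (Omega0 : set (set T))
    (D : Type) (le : D -> D -> Prop) (D0 : set D) :
  viable_base Omega0 -> bc_domain le -> is_basis le D0 ->
  [/\ (forall g, hatB Omega0 le D0 g -> hat_scott_continuous Omega0 le g),
      bc_domain (fle Omega0 le),
      is_basis (fle Omega0 le) (fun f => hatB Omega0 le D0 (proj1_sig f)) &
      (countable_set Omega0 -> omega_continuous le ->
         omega_continuous (fle Omega0 le))].
Proof.
move=> VB [[PO DC] [bot hbot] CP BND] HD.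
have basis := basis_fle VB PO DC hbot CP BND HD.
have fpo := fle_po Omega0 PO.
split.
- by move=> g; apply: (hatB_cont VB).
- split.
  + split=> // A dA; have [s hs] := dir_lub VB DC dA; exists s; exact: pw_lub.
  + by exists (fbot VB le bot); apply: (fbot_le VB hbot).
  + exact: (basis_cont _ _ fpo _ basis).
  + by move=> A hA; apply: (bnd_lub VB PO DC hbot CP BND).
- exact: basis.
- move=> [gO hgO] [_ [B [HB [gB hgB]]]].
  have basisB := basis_fle VB PO DC hbot CP BND HB.
  split; first exact: (basis_cont _ _ fpo _ basisB).
  exists (fun f => hatB Omega0 le B (proj1_sig f)); split=> //.
  pose rep (f : fspace Omega0 le) (s : seq (nat * nat)) :=
    exists n (b : 'I_n -> D) (W : 'I_n -> set T),
      [/\ forall i, Omega0 (W i), forall i, B (b i),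
        forall y, is_lub le (fun d => exists i, hatO Omega0 (downset Omega0 (W i)) y /\ d = b i)
                      (proj1_sig f y) &
        s = [seq (gB (b i), gO (W i)) | i <- enum 'I_n]].
  have ex f : exists s, hatB Omega0 le B (proj1_sig f) -> rep f s.
    case: (EM (hatB Omega0 le B (proj1_sig f))) => [[n [b [W [oW Bb _ hl]]]]|nh];
      last by exists [::].
    by exists [seq (gB (b i), gO (W i)) | i <- enum 'I_n] => _; exists n, b, W.
  have [cf hcf] := choice ex.
  exists (fun f => pickle (cf f)) => f1 f2 h1 h2 e.
  have e' : cf f1 = cf f2 := pcan_inj (@pickleK_inv _) e.
  have [n1 [b1 [W1 [o1 B1 l1 s1]]]] := hcf f1 h1.
  have [n2 [b2 [W2 [o2 B2 l2 s2]]]] := hcf f2 h2.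
  have es : [seq (gB (b1 i), gO (W1 i)) | i <- enum 'I_n1] =
            [seq (gB (b2 i), gO (W2 i)) | i <- enum 'I_n2] by rewrite -s1 -s2.
  apply: (le_anti _ _ fpo).
  + exact: (code_le hgB hgO o1 B1 o2 B2 l1 l2 es).
  + exact: (code_le hgB hgO o2 B2 o1 B1 l2 l1 (esym es)).
Qed.
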